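(* Let $A,B$ be idempotent $\Gamma$-graded rings and ${}_AP_B$, ${}_BQ_A$ graded bimodules unital on both sides, such that there is a graded Morita context $(A,B,P,Q,\mu,\nu)$ with surjective trace maps. Then: (1) ${}_AP$, ${}_BQ$, $Q_A$ and $P_B$ generate ${}_AA$, ${}_BB$, $A_A$, $B_B$ respectively. Hence ${}_AP/t_A(P)$, ${}_BQ/t_B(Q)$, $P_B/t_B(P)$ and $Q_A/t_A(Q)$ are graded generators of $A\text{-gr}$, $B\text{-gr}$, $\text{gr-}B$ and $\text{gr-}A$ respectively. (2) $\ker\mu$ and $\ker\nu$ are torsion graded bimodules. (3) The maps ${}_BQ_A\to B\cdot\mathrm{HOM}_A(P,A)$, $q\mapsto\langle -,q\rangle$; ${}_BQ_A\to\mathrm{HOM}_B(P,B)\cdot A$, $q\mapsto[q,-]$; ${}_AP_B\to A\cdot\mathrm{HOM}_B(Q,B)$, $p\mapsto[-,p]$; and ${}_AP_B\to\mathrm{HOM}_A(Q,A)\cdot B$, $p\mapsto\langle p,-\rangle$ are graded epimorphisms of degree $e$ of graded bimodules, whose kernels are, respectively, left $B$-torsion, right $A$-torsion, left $A$-torsion and right $B$-torsion. If in addition $A$, $B$, ${}_AP_B$ and ${}_BQ_A$ are all left and right torsion-free, then: (4) $Q\cong B\cdot\mathrm{HOM}_A(P,A)$, $Q\cong\mathrm{HOM}_B(P,B)\cdot A$, $P\cong A\cdot\mathrm{HOM}_B(Q,B)$ and $P\cong\mathrm{HOM}_A(Q,A)\cdot B$; (5) the context is non-degenerate.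
   Context: $\Gamma$ is a fixed multiplicative group with identity $e$. Rings are associative $\Gamma$-graded, not necessarily unital; $A$ is idempotent if $A^2=A$. A graded module is unital if $AM=M$ (right: $MA=M$); $t_A(M)=\{m: Am=0\}$ (right: $\{m:mA=0\}$); torsion-free means zero torsion part; a module is torsion if it equals its torsion part. $A\text{-gr}$ (resp. $\text{gr-}A$): unital torsion-free graded left (resp. right) $A$-modules with degree-preserving maps. Suspension $M(\sigma)_\tau=M_{\tau\sigma}$ (left), $M_{\sigma\tau}$ (right). Graded homs of degree $\sigma$: $f(M_\tau)\subseteq N_{\tau\sigma}$ (left), $f(M_\tau)\subseteq N_{\sigma\tau}$ (right); $\mathrm{HOM}$ = direct sum over degrees. Module structures: for ${}_RM_S$ and a graded left $R$-module $N$, $\mathrm{HOM}_R(M,N)$ is left $S$ via $(sf)(m)=f(ms)$, and if $N=R$ also right $R$ via $(fr)(m)=f(m)r$; for a graded right $S$-module $N$, $\mathrm{HOM}_S(M,N)$ is right $R$ via $(fr)(m)=f(rm)$, and if $N=S$ also left $S$ via $(sf)(m)=sf(m)$. $S\cdot H$, $H\cdot R$: finite sums $\sum s_ih_i$, $\sum h_ir_i$. A unital graded module $P$ generates a unital graded module $M$ if for every unital graded $N$ and nonzero degree-preserving $f:M\to N$ there are $\sigma\in\Gamma$ and degree-preserving $g:P(\sigma)\to M$ with $f\circ g\neq0$; a graded generator of $A\text{-gr}$ is an object generating every object (analogously on the right). A graded Morita context $(A,B,P,Q,\mu,\nu)$: idempotent graded rings $A,B$, graded bimodules ${}_AP_B$,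 ${}_BQ_A$ unital on both sides, degree-$e$ graded bimodule maps $\mu:P\otimes_BQ\to A$, $\langle p,q\rangle=\mu(p\otimes q)$, and $\nu:Q\otimes_AP\to B$, $[q,p]=\nu(q\otimes p)$, with $p'[q,p]=\langle p',q\rangle p$ and $q'\langle p,q\rangle=[q',p]q$. It is non-degenerate if $P,Q$ are torsion-free on both sides and the pairings are faithful: $\langle P,q\rangle=0\Rightarrow q=0$, $\langle p,Q\rangle=0\Rightarrow p=0$, $[Q,p]=0\Rightarrow p=0$, $[q,P]=0\Rightarrow q=0$. *)

(* Defs.v *)
(* Structures are given as plain
   data records (carrier + operations + grading) together with Prop-valued
   predicates stating the axioms; this lets us build quotient modules
   M / t(M) as data without proof obligations. *)
From Stdlib Require List.
From Stdlib Require Import ClassicalEpsilon.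
From mathcomp Require Import all_boot.


Set Implicit Arguments.
Unset Strict Implicit.
Unset Printing Implicit Defensive.

Record group := Group {
  gT :> Type;
  gmul : gT -> gT -> gT;
  gone : gT;
  ginv : gT -> gT;
  gmulA : forall x y z, gmul x (gmul y z) = gmul (gmul x y) z;
  gmul1x : forall x, gmul gone x = x;
  gmulx1 : forall x, gmul x gone = x;
  gmulVx : forall x, gmul (ginv x) x = gone;
  gmulxV : forall x, gmul x (ginv x) = gone }.

Record abgrp := AbGrp {
  ab :> Type;
  aadd : ab -> ab -> ab;
  azero : ab;
  aopp : ab -> ab }.
Arguments azero {a}.

Definition is_abgrp (M : abgrp) : Prop :=
  (forall x y z : M, aadd x (aadd y z) = aadd (aadd x y) z) /\
  (forall x y : M, aadd x y = aadd y x) /\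
  (forall x : M, aadd azero x = x) /\
  (forall x : M, aadd (aopp x) x = azero).

Definition asum (M : abgrp) (X : Type) (s : seq X) (F : X -> M) : M :=
  foldr (fun x acc => aadd (F x) acc) azero s.

(* comp s x  <->  x lies in the homogeneous component of degree s;
   M is the internal direct sum of its homogeneous components.        *)
Definition is_graded (G : group) (M : abgrp) (comp : G -> M -> Prop) : Prop :=
  (forall s, comp s azero) /\
  (forall s x y, comp s x -> comp s y -> comp s (aadd x y)) /\
  (forall s x, comp s x -> comp s (aopp x)) /\
  (forall x : M, exists (l : seq G) (f : G -> M),
      List.NoDup l /\ (forall s, comp s (f s)) /\ x = asum l f) /\
  (forall (l : seq G) (f : G -> M),
      List.NoDup l -> (forall s, comp s (f s)) -> asum l f = azero ->
      forall s, List.In s l -> f s = azero).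

Record gring (G : group) := GRing {
  rab :> abgrp;
  rmul : rab -> rab -> rab;
  rcomp : G -> rab -> Prop }.

Definition is_gring (G : group) (A : gring G) : Prop :=
  is_abgrp A /\
  (forall x y z : A, rmul x (rmul y z) = rmul (rmul x y) z) /\
  (forall x y z : A, rmul (aadd x y) z = aadd (rmul x z) (rmul y z)) /\
  (forall x y z : A, rmul x (aadd y z) = aadd (rmul x y) (rmul x z)) /\
  is_graded (@rcomp G A) /\
  (forall s t (a b : A), rcomp s a -> rcomp t b -> rcomp (gmul s t) (rmul a b)).

Definition idempotent (G : group) (A : gring G) : Prop :=
  forall a : A, exists l : seq (A * A), a = asum l (fun x => rmul x.1 x.2).

Section Modules.
Variable G : group.

Record lmod (A : gring G) := LMod {
  lab :> abgrp;
  lact : A -> lab -> lab;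
  lcomp : G -> lab -> Prop }.

Record rmod (A : gring G) := RMod {
  rmab :> abgrp;
  ract : rmab -> A -> rmab;
  rmcomp : G -> rmab -> Prop }.
Arguments lcomp {A} l _ _.
Arguments rmcomp {A} r _ _.


Definition is_lgmod (A : gring G) (M : lmod A) : Prop :=
  is_abgrp M /\
  (forall (a b : A) (m : M), lact (aadd a b) m = aadd (lact a m) (lact b m)) /\
  (forall (a : A) (m n : M), lact a (aadd m n) = aadd (lact a m) (lact a n)) /\
  (forall (a b : A) (m : M), lact (rmul a b) m = lact a (lact b m)) /\
  is_graded (lcomp M) /\
  (forall s t (a : A) (m : M), rcomp s a -> lcomp M t m -> lcomp M (gmul s t) (lact a m)).

Definition is_rgmod (A : gring G) (M : rmod A) : Prop :=
  is_abgrp M /\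
  (forall (m : M) (a b : A), ract m (aadd a b) = aadd (ract m a) (ract m b)) /\
  (forall (m n : M) (a : A), ract (aadd m n) a = aadd (ract m a) (ract n a)) /\
  (forall (m : M) (a b : A), ract m (rmul a b) = ract (ract m a) b) /\
  is_graded (rmcomp M) /\
  (forall s t (m : M) (a : A), rmcomp M t m -> rcomp s a -> rmcomp M (gmul t s) (ract m a)).

Definition lreg (A : gring G) : lmod A := @LMod A (rab A) (@rmul G A) (@rcomp G A).
Definition rreg (A : gring G) : rmod A := @RMod A (rab A) (@rmul G A) (@rcomp G A).

Definition lunital (A : gring G) (M : lmod A) : Prop :=
  forall m : M, exists l : seq (A * M), m = asum l (fun x => lact x.1 x.2).
Definition runital (A : gring G) (M : rmod A) : Prop :=
  forall m : M, exists l : seq (M * A), m = asum l (fun x => ract x.1 x.2).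

Definition ltors (A : gring G) (M : lmod A) (m : M) : Prop :=
  forall a : A, lact a m = azero.
Definition rtors (A : gring G) (M : rmod A) (m : M) : Prop :=
  forall a : A, ract m a = azero.


Arguments ltors {A} M m.
Arguments rtors {A} M m.

Definition ltfree (A : gring G) (M : lmod A) : Prop :=
  forall m : M, ltors M m -> m = azero.
Definition rtfree (A : gring G) (M : rmod A) : Prop :=
  forall m : M, rtors M m -> m = azero.

Definition ladditive (M N : abgrp) (f : M -> N) : Prop :=
  forall x y, f (aadd x y) = aadd (f x) (f y).

Definition lgr_map (A : gring G) (M N : lmod A) (f : M -> N) : Prop :=
  ladditive f /\ (forall (a : A) x, f (lact a x) = lact a (f x)) /\
  (forall t x, lcomp M t x -> lcomp N t (f x)).
Definition rgr_map (A : gring G) (M N : rmod A) (f : M -> N) : Prop :=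
  ladditive f /\ (forall x (a : A), f (ract x a) = ract (f x) a) /\
  (forall t x, rmcomp M t x -> rmcomp N t (f x)).

(* degree-preserving maps from the suspension P(s) to M, where
   P(s)_t = P_{ts} (left) and P(s)_t = P_{st} (right); the suspension has
   the same underlying module as P, only the grading is shifted. *)
Definition lgr_map_susp (A : gring G) (P M : lmod A) (s : G) (g : P -> M) : Prop :=
  ladditive g /\ (forall (a : A) x, g (lact a x) = lact a (g x)) /\
  (forall t x, lcomp P (gmul t s) x -> lcomp M t (g x)).
Definition rgr_map_susp (A : gring G) (P M : rmod A) (s : G) (g : P -> M) : Prop :=
  ladditive g /\ (forall x (a : A), g (ract x a) = ract (g x) a) /\
  (forall t x, rmcomp P (gmul s t) x -> rmcomp M t (g x)).

Definition lhom_deg (A : gring G) (M N : lmod A) (s : G) (f : M -> N) : Prop :=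
  ladditive f /\ (forall (a : A) x, f (lact a x) = lact a (f x)) /\
  (forall t x, lcomp M t x -> lcomp N (gmul t s) (f x)).
Definition rhom_deg (A : gring G) (M N : rmod A) (s : G) (f : M -> N) : Prop :=
  ladditive f /\ (forall x (a : A), f (ract x a) = ract (f x) a) /\
  (forall t x, rmcomp M t x -> rmcomp N (gmul s t) (f x)).

(* HOM = direct sum over degrees: finite sums of homogeneous homs *)
Definition lHOM (A : gring G) (M N : lmod A) (F : M -> N) : Prop :=
  exists l : seq (G * (M -> N)),
    (forall x, List.In x l -> lhom_deg x.1 x.2) /\
    F = (fun m => asum l (fun x => x.2 m)).
Definition rHOM (A : gring G) (M N : rmod A) (F : M -> N) : Prop :=
  exists l : seq (G * (M -> N)),
    (forall x, List.In x l -> rhom_deg x.1 x.2) /\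
    F = (fun m => asum l (fun x => x.2 m)).


Arguments lhom_deg {A} M N s f.
Arguments rhom_deg {A} M N s f.
Arguments lHOM {A} M N F.
Arguments rHOM {A} M N F.

Definition lgenerates (A : gring G) (P M : lmod A) : Prop :=
  forall N : lmod A, is_lgmod N -> lunital N ->
  forall f : M -> N, lgr_map f -> (exists x, f x <> azero) ->
  exists (s : G) (g : P -> M), lgr_map_susp s g /\ exists x, f (g x) <> azero.
Definition rgenerates (A : gring G) (P M : rmod A) : Prop :=
  forall N : rmod A, is_rgmod N -> runital N ->
  forall f : M -> N, rgr_map f -> (exists x, f x <> azero) ->
  exists (s : G) (g : P -> M), rgr_map_susp s g /\ exists x, f (g x) <> azero.

Definition lgr_obj (A : gring G) (M : lmod A) : Prop :=
  is_lgmod M /\ lunital M /\ ltfree M.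
Definition rgr_obj (A : gring G) (M : rmod A) : Prop :=
  is_rgmod M /\ runital M /\ rtfree M.
Definition lgr_generator (A : gring G) (P : lmod A) : Prop :=
  lgr_obj P /\ forall M : lmod A, lgr_obj M -> lgenerates P M.
Definition rgr_generator (A : gring G) (P : rmod A) : Prop :=
  rgr_obj P /\ forall M : rmod A, rgr_obj M -> rgenerates P M.

(* Quotients M / t(M): elements are the cosets m + t(M).             *)
Definition lcoset (A : gring G) (M : lmod A) (m : M) : M -> Prop :=
  fun y => ltors M (aadd m (aopp y)).
Definition lqcar (A : gring G) (M : lmod A) : Type :=
  {X : M -> Prop | exists m, X = lcoset m}.
Definition lq_of (A : gring G) (M : lmod A) (m : M) : lqcar M :=
  exist _ (lcoset m) (ex_intro _ m erefl).
Definition lq_rep (A : gring G) (M : lmod A) (X : lqcar M) : M :=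
  proj1_sig (constructive_indefinite_description _ (proj2_sig X)).
Definition lquot (A : gring G) (M : lmod A) : lmod A :=
  @LMod A (AbGrp (fun X Y => lq_of (aadd (lq_rep X) (lq_rep Y)))
              (lq_of (azero : M))
              (fun X => lq_of (aopp (lq_rep X))))
       (fun a X => lq_of (lact a (lq_rep X)))
       (fun s X => exists m, lcomp M s m /\ X = lq_of m).

Definition rcoset (A : gring G) (M : rmod A) (m : M) : M -> Prop :=
  fun y => rtors M (aadd m (aopp y)).
Definition rqcar (A : gring G) (M : rmod A) : Type :=
  {X : M -> Prop | exists m, X = rcoset m}.
Definition rq_of (A : gring G) (M : rmod A) (m : M) : rqcar M :=
  exist _ (rcoset m) (ex_intro _ m erefl).
Definition rq_rep (A : gring G) (M : rmod A) (X : rqcar M) : M :=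
  proj1_sig (constructive_indefinite_description _ (proj2_sig X)).
Definition rquot (A : gring G) (M : rmod A) : rmod A :=
  @RMod A (AbGrp (fun X Y => rq_of (aadd (rq_rep X) (rq_rep Y)))
              (rq_of (azero : M))
              (fun X => rq_of (aopp (rq_rep X))))
       (fun X a => rq_of (ract (rq_rep X) a))
       (fun s X => exists m, rmcomp M s m /\ X = rq_of m).

Record bimod (A B : gring G) := BiMod {
  bab :> abgrp;
  blact : A -> bab -> bab;
  bract : bab -> B -> bab;
  bcomp : G -> bab -> Prop }.
Arguments bcomp {A B} b _ _.

Definition bimod_l (A B : gring G) (M : bimod A B) : lmod A :=
  @LMod A (bab M) (@blact A B M) (bcomp M).
Definition bimod_r (A B : gring G) (M : bimod A B) : rmod B :=
  @RMod B (bab M) (@bract A B M) (bcomp M).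

Definition is_gbimod (A B : gring G) (M : bimod A B) : Prop :=
  is_lgmod (bimod_l M) /\ is_rgmod (bimod_r M) /\
  (forall (a : A) (m : M) (b : B), bract (blact a m) b = blact a (bract m b)).

(* The degree-e bimodule maps
   mu : P (x)_B Q -> A and nu : Q (x)_A P -> B are given, via the universal
   property of the tensor product, by balanced biadditive pairings
   mu p q = <p,q>,  nu q p = [q,p].                                    *)
Definition is_gmorita (A B : gring G) (P : bimod A B) (Q : bimod B A)
    (mu : P -> Q -> A) (nu : Q -> P -> B) : Prop :=
  [/\ is_gring A /\ is_gring B /\ idempotent A /\ idempotent B,
      is_gbimod P /\ is_gbimod Q /\
      lunital (bimod_l P) /\ runital (bimod_r P) /\
      lunital (bimod_l Q) /\ runital (bimod_r Q),
      (forall p p' q, mu (aadd p p') q = aadd (mu p q) (mu p' q)) /\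
      (forall p q q', mu p (aadd q q') = aadd (mu p q) (mu p q')) /\
      (forall p (b : B) q, mu (bract p b) q = mu p (blact b q)) /\
      (forall (a : A) p q, mu (blact a p) q = rmul a (mu p q)) /\
      (forall p q (a : A), mu p (bract q a) = rmul (mu p q) a) /\
      (forall s t p q, bcomp P s p -> bcomp Q t q -> rcomp (gmul s t) (mu p q)),
      (forall q q' p, nu (aadd q q') p = aadd (nu q p) (nu q' p)) /\
      (forall q p p', nu q (aadd p p') = aadd (nu q p) (nu q p')) /\
      (forall q (a : A) p, nu (bract q a) p = nu q (blact a p)) /\
      (forall (b : B) q p, nu (blact b q) p = rmul b (nu q p)) /\
      (forall q p (b : B), nu q (bract p b) = rmul (nu q p) b) /\
      (forall s t q p, bcomp Q s q -> bcomp P t p -> rcomp (gmul s t) (nu q p))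
    & (forall p' q p, bract p' (nu q p) = blact (mu p' q) p) /\
      (forall q' p q, bract q' (mu p q) = blact (nu q' p) q) ].

Definition mu_surj (A B : gring G) (P : bimod A B) (Q : bimod B A)
    (mu : P -> Q -> A) : Prop :=
  forall a : A, exists l : seq (P * Q), a = asum l (fun x => mu x.1 x.2).
Definition nu_surj (A B : gring G) (P : bimod A B) (Q : bimod B A)
    (nu : Q -> P -> B) : Prop :=
  forall b : B, exists l : seq (Q * P), b = asum l (fun x => nu x.1 x.2).

(* An element  sum_i m_i (x) n_i  of M (x)_R N (M right R-module, N left
   R-module), given by the list l of pairs, is zero in the tensor product,
   i.e. it is killed by every R-balanced biadditive map into an abelian
   group (universal property of M (x)_R N). *)
Definition tensor_zero (R S T : gring G) (M : bimod S R) (N : bimod R T)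
    (l : seq (M * N)) : Prop :=
  forall (Z : abgrp) (f : M -> N -> Z), is_abgrp Z ->
    (forall m m' n, f (aadd m m') n = aadd (f m n) (f m' n)) ->
    (forall m n n', f m (aadd n n') = aadd (f m n) (f m n')) ->
    (forall m (r : R) n, f (bract m r) n = f m (blact r n)) ->
    asum l (fun x => f x.1 x.2) = azero.

Definition ker_mu_torsion (A B : gring G) (P : bimod A B) (Q : bimod B A)
    (mu : P -> Q -> A) : Prop :=
  forall l : seq (P * Q), asum l (fun x => mu x.1 x.2) = azero ->
    (forall a : A, tensor_zero [seq (blact a x.1, x.2) | x <- l]) /\
    (forall a : A, tensor_zero [seq (x.1, bract x.2 a) | x <- l]).
Definition ker_nu_torsion (A B : gring G) (P : bimod A B) (Q : bimod B A)
    (nu : Q -> P -> B) : Prop :=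
  forall l : seq (Q * P), asum l (fun x => nu x.1 x.2) = azero ->
    (forall b : B, tensor_zero [seq (blact b x.1, x.2) | x <- l]) /\
    (forall b : B, tensor_zero [seq (x.1, bract x.2 b) | x <- l]).

(* For M = _R M _S :
   S . HOM_R(M,R)  (left S-action (s f)(m) = f(m s), right R-action
                    (f r)(m) = f(m) r)                                 *)
Definition SHOM (R S : gring G) (M : bimod R S) (F : M -> R) : Prop :=
  exists l : seq (S * (M -> R)),
    (forall x, List.In x l -> lHOM (bimod_l M) (lreg R) x.2) /\
    F = (fun m => asum l (fun x => x.2 (bract m x.1))).
(* HOM_S(M,S) . R  (right R-action (f r)(m) = f(r m), left S-action
                    (s f)(m) = s f(m))                                 *)
Definition HOMR (R S : gring G) (M : bimod R S) (F : M -> S) : Prop :=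
  exists l : seq ((M -> S) * R),
    (forall x, List.In x l -> rHOM (bimod_r M) (rreg S) x.1) /\
    F = (fun m => asum l (fun x => x.1 (blact x.2 m))).

Definition SHOM_epi (R S : gring G) (M : bimod R S) (N : bimod S R)
    (phi : N -> M -> R) : Prop :=
  [/\ forall n, SHOM (phi n),
      forall F, SHOM F -> exists n, phi n = F,
      forall n n', phi (aadd n n') = (fun m => aadd (phi n m) (phi n' m)),
      (forall (s : S) n, phi (blact s n) = (fun m => phi n (bract m s))) /\
      (forall n (r : R), phi (bract n r) = (fun m => rmul (phi n m) r))
    & forall t n, bcomp N t n -> lhom_deg (bimod_l M) (lreg R) t (phi n)].
Definition HOMR_epi (R S : gring G) (M : bimod R S) (N : bimod S R)
    (phi : N -> M -> S) : Prop :=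
  [/\ forall n, HOMR (phi n),
      forall F, HOMR F -> exists n, phi n = F,
      forall n n', phi (aadd n n') = (fun m => aadd (phi n m) (phi n' m)),
      (forall (s : S) n, phi (blact s n) = (fun m => rmul s (phi n m))) /\
      (forall n (r : R), phi (bract n r) = (fun m => phi n (blact r m)))
    & forall t n, bcomp N t n -> rhom_deg (bimod_r M) (rreg S) t (phi n)].

Definition SHOM_iso (R S : gring G) (M : bimod R S) (N : bimod S R)
    (phi : N -> M -> R) : Prop :=
  SHOM_epi phi /\ injective phi /\
  (forall t F, SHOM F -> lhom_deg (bimod_l M) (lreg R) t F ->
     exists n, bcomp N t n /\ phi n = F).
Definition HOMR_iso (R S : gring G) (M : bimod R S) (N : bimod S R)
    (phi : N -> M -> S) : Prop :=
  HOMR_epi phi /\ injective phi /\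
  (forall t F, HOMR F -> rhom_deg (bimod_r M) (rreg S) t F ->
     exists n, bcomp N t n /\ phi n = F).

Definition nondegenerate (A B : gring G) (P : bimod A B) (Q : bimod B A)
    (mu : P -> Q -> A) (nu : Q -> P -> B) : Prop :=
  [/\ ltfree (bimod_l P) /\ rtfree (bimod_r P) /\
      ltfree (bimod_l Q) /\ rtfree (bimod_r Q),
      forall q, (forall p, mu p q = azero) -> q = azero,
      forall p, (forall q, mu p q = azero) -> p = azero,
      forall p, (forall q, nu q p = azero) -> p = azero
    & forall q, (forall p, nu q p = azero) -> q = azero].

End Modules.

Arguments lcomp {G A} l _ _.
Arguments rmcomp {G A} r _ _.
Arguments ltors {G A} M m.
Arguments rtors {G A} M m.
Arguments lhom_deg {G A} M N s f.
Arguments rhom_deg {G A} M N s f.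
Arguments lHOM {G A} M N F.
Arguments rHOM {G A} M N F.
Arguments bcomp {G A B} b _ _.

(* Main.v *)
Require Import Defs.
From mathcomp Require Import all_boot.
From Stdlib Require FinFun.
From Stdlib Require Import ClassicalEpsilon FunctionalExtensionality PropExtensionality ProofIrrelevance.
Set Implicit Arguments.
Unset Strict Implicit.
Unset Printing Implicit Defensive.
Existing Class is_abgrp.
Section AbG.
Context {M : abgrp} {HM : is_abgrp M}.

Lemma addA (x y z : M) : aadd x (aadd y z) = aadd (aadd x y) z.
Proof. by case: HM. Qed.
Lemma addC (x y : M) : aadd x y = aadd y x.
Proof. by case: HM => _ []. Qed.
Lemma add0 (x : M) : aadd azero x = x.
Proof. by case: HM => _ [] _ []. Qed.
Lemma addNx (x : M) : aadd (aopp x) x = azero.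
Proof. by case: HM => _ [] _ []. Qed.
Lemma addx0 (x : M) : aadd x azero = x.
Proof. by rewrite addC add0. Qed.
Lemma addxN (x : M) : aadd x (aopp x) = azero.
Proof. by rewrite addC addNx. Qed.
Lemma add_cancl (x y z : M) : aadd x y = aadd x z -> y = z.
Proof.
move=> H; have := f_equal (aadd (aopp x)) H.
by rewrite !addA addNx !add0.
Qed.
Lemma add_eq0 (x y : M) : aadd x y = azero -> y = aopp x.
Proof. by move=> H; apply: (@add_cancl x); rewrite H addxN. Qed.
Lemma oppK (x : M) : aopp (aopp x) = x.
Proof. by apply/esym/add_eq0; rewrite addNx. Qed.
Lemma opp0 : aopp (azero : M) = azero.
Proof. by apply/esym/add_eq0; rewrite add0. Qed.
Lemma oppD (x y : M) : aopp (aadd x y) = aadd (aopp x) (aopp y).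
Proof.
apply/esym/add_eq0. rewrite (addC (aopp x)) addA -(addA x) addxN addx0 addxN //.
Qed.
Lemma sub_eq0 (x y : M) : aadd x (aopp y) = azero -> x = y.
Proof. by move=> H; rewrite -(oppK x) -(add_eq0 H) oppK. Qed.
Lemma subxx (x : M) : aadd x (aopp x) = azero.
Proof. exact: addxN. Qed.
Lemma subKx (x y : M) : aadd (aadd x (aopp y)) y = x.
Proof. by rewrite -addA addNx addx0. Qed.

Lemma asum_cat X (l1 l2 : seq X) (F : X -> M) :
  asum (l1 ++ l2) F = aadd (asum l1 F) (asum l2 F).
Proof. elim: l1 => [|x l IH] /=; first by rewrite add0. by rewrite IH addA. Qed.
Lemma asum_map X Y (g : X -> Y) (l : seq X) (F : Y -> M) :
  asum (map g l) F = asum l (fun x => F (g x)).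
Proof. by elim: l => [|x l IH] //=; rewrite IH. Qed.
Lemma asum_add X (l : seq X) (F H : X -> M) :
  asum l (fun x => aadd (F x) (H x)) = aadd (asum l F) (asum l H).
Proof.
elim: l => [|x l IH] /=; first by rewrite add0.
rewrite IH -!addA; congr aadd; rewrite !addA; congr aadd; exact: addC.
Qed.
Lemma asum_opp X (l : seq X) (F : X -> M) :
  asum l (fun x => aopp (F x)) = aopp (asum l F).
Proof. elim: l => [|x l IH] /=; first by rewrite opp0. by rewrite IH oppD. Qed.
Lemma asum0 X (l : seq X) : asum l (fun _ => (azero : M)) = azero.
Proof. elim: l => [|x l IH] //=; by rewrite IH add0. Qed.
Lemma asum_eq X (l : seq X) (F H : X -> M) :
  (forall x, List.In x l -> F x = H x) -> asum l F = asum l H.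
Proof.
elim: l => [|x l IH] //= E; rewrite E; last by left.
by rewrite IH // => y Hy; apply: E; right.
Qed.
Lemma asum_nz X (l : seq X) (F : X -> M) :
  asum l F <> azero -> exists x, List.In x l /\ F x <> azero.
Proof.
elim: l => [|x l IH] //= H.
case: (classic (F x = azero)) => Hx.
  have [y [Hy Fy]] : exists y, List.In y l /\ F y <> azero.
    by apply: IH => E; apply: H; rewrite Hx E add0.
  by exists y; split => //; right.
by exists x; split => //; left.
Qed.
Lemma asum_zero X (l : seq X) (F : X -> M) :
  (forall x, List.In x l -> F x = azero) -> asum l F = azero.
Proof. by move=> H; rewrite (asum_eq H) asum0. Qed.
Lemma asum_flat X Y (l : seq X) (g : X -> seq Y) (F : Y -> M) :
  asum (flatten (map g l)) F = asum l (fun x => asum (g x) F).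
Proof. elim: l => [|x l IH] //=. by rewrite asum_cat IH. Qed.
End AbG.

Definition deq (G : group) (x y : G) : bool :=
  if excluded_middle_informative (x = y) then true else false.
Lemma deqP (G : group) (x y : G) : reflect (x = y) (deq x y).
Proof. rewrite /deq; case: excluded_middle_informative => H; constructor => //. Qed.
Lemma deq_refl (G : group) (x : G) : deq x x.
Proof. by apply/deqP. Qed.

Lemma asum_delta (M : abgrp) (G : group) {HM : is_abgrp M} (l : seq G) t (v : M) :
  List.NoDup l -> List.In t l -> asum l (fun c => if deq c t then v else azero) = v.
Proof.
elim: l => [|x l IH] //= ND [E|I].
- subst x; rewrite deq_refl asum_zero ?addx0 // => y Hy.
  case: deqP => // E; subst y. by move/List.NoDup_cons_iff: ND => [].
- move/List.NoDup_cons_iff: ND => [nx ND]. case: deqP => E; first by subst x.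
  rewrite add0 //; exact: IH.
Qed.

Section Additive.
Context {M N : abgrp} {HM : is_abgrp M} {HN : is_abgrp N}.
Variable f : M -> N.
Hypothesis Hf : ladditive f.
Lemma fadd x y : f (aadd x y) = aadd (f x) (f y).
Proof. exact: Hf. Qed.
Lemma f0 : f azero = azero.
Proof.
apply: (@add_cancl _ _ (f azero)). by rewrite -Hf !addx0.
Qed.
Lemma fopp x : f (aopp x) = aopp (f x).
Proof. apply: add_eq0 => //. by rewrite -Hf addxN // f0. Qed.
Lemma fasum X (l : seq X) (F : X -> M) : f (asum l F) = asum l (fun x => f (F x)).
Proof. elim: l => [|x l IH] /=; first exact: f0. by rewrite Hf IH. Qed.
End Additive.

Lemma ladditive_asum (M N : abgrp) {HN : is_abgrp N} X (l : seq X) (F : X -> M -> N) :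
  (forall x, List.In x l -> ladditive (F x)) ->
  ladditive (fun m => asum l (fun x => F x m)).
Proof.
elim: l => [|x l IH] /= H m m'; first by rewrite add0.
have Hx : ladditive (F x) by apply: H; left.
have Hl : ladditive (fun m => asum l (fun x => F x m)) by apply: IH => y Hy; apply: H; right.
rewrite /ladditive in Hx Hl; rewrite Hx Hl.
rewrite -!addA; congr aadd. rewrite !addA; congr aadd; exact: addC.
Qed.

Section Graded.
Context {G : group} {M : abgrp} {HM : is_abgrp M} (comp : G -> M -> Prop).
Hypothesis Hg : is_graded comp.

Lemma gr0 s : comp s azero. Proof. by case: Hg. Qed.
Lemma gradd s x y : comp s x -> comp s y -> comp s (aadd x y).
Proof. case: Hg => _ [H] _; exact: H. Qed.
Lemma gropp s x : comp s x -> comp s (aopp x).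
Proof. case: Hg => _ [] _ [H] _; exact: H. Qed.
Lemma grdec (x : M) : exists (l : seq G) (f : G -> M),
      List.NoDup l /\ (forall s, comp s (f s)) /\ x = asum l f.
Proof. by case: Hg => _ [] _ [] _ []. Qed.
Lemma gruniq (l : seq G) (f : G -> M) :
      List.NoDup l -> (forall s, comp s (f s)) -> asum l f = azero ->
      forall s, List.In s l -> f s = azero.
Proof. case: Hg => _ [] _ [] _ [] _ H; exact: H. Qed.

Lemma grasum X (l : seq X) (F : X -> M) s :
  (forall x, List.In x l -> comp s (F x)) -> comp s (asum l F).
Proof.
elim: l => [|x l IH] /= H; first exact: gr0.
apply: gradd; first by apply: H; left.
by apply: IH => y Hy; apply: H; right.
Qed.

Lemma grdec_with (x : M) (t : G) : exists (l : seq G) (f : G -> M),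
      List.NoDup l /\ List.In t l /\ (forall s, comp s (f s)) /\ x = asum l f.
Proof.
have [l [f [ND [Hc E]]]] := grdec x.
case: (classic (List.In t l)) => I.
  by exists l, f.
exists (t :: l), (fun s => if deq s t then azero else f s).
split; first by constructor.
split; first by left.
split; first by move=> s; case: deq => //; exact: gr0.
rewrite /= deq_refl add0 E; apply: asum_eq => y Hy.
by case: deqP => // E'; subst y.
Qed.

Lemma gruniq_k (l : seq G) (h : G -> M) (k kinv : G -> G) :
  (forall s, kinv (k s) = s) -> (forall d, k (kinv d) = d) ->
  List.NoDup l -> (forall s, comp (k s) (h s)) -> asum l h = azero ->
  forall s, List.In s l -> h s = azero.
Proof.
move=> K1 K2 ND Hc E s Hs.
have ND' : List.NoDup (map k l).
  apply: FinFun.Injective_map_NoDup => // a b Eab.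
  by rewrite -(K1 a) Eab K1.
have := @gruniq (map k l) (fun d => h (kinv d)) ND'.
rewrite asum_map. under [asum _ _]asum_eq do rewrite K1.
move=> /(_ _ E (k s)). rewrite K1; apply.
- by move=> d; rewrite -{1}(K2 d).
- exact: List.in_map.
Qed.
End Graded.

Lemma gK1 (G : group) (d s : G) : gmul (ginv d) (gmul d s) = s.
Proof. by rewrite gmulA gmulVx gmul1x. Qed.
Lemma gK2 (G : group) (d s : G) : gmul d (gmul (ginv d) s) = s.
Proof. by rewrite gmulA gmulxV gmul1x. Qed.
Lemma gK3 (G : group) (d s : G) : gmul (gmul s d) (ginv d) = s.
Proof. by rewrite -gmulA gmulxV gmulx1. Qed.
Lemma gK4 (G : group) (d s : G) : gmul (gmul s (ginv d)) d = s.
Proof. by rewrite -gmulA gmulVx gmulx1. Qed.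
Existing Class is_gring.
Existing Class is_lgmod.
Existing Class is_rgmod.
Existing Class is_gbimod.

Section Ring.
Context {G : group} {A : gring G} {HA : is_gring A}.
#[local] Instance gring_ab : is_abgrp A. Proof. by case: HA. Qed.
Lemma mulA (x y z : A) : rmul x (rmul y z) = rmul (rmul x y) z.
Proof. by case: HA => _ []. Qed.
Lemma mulDl (x y z : A) : rmul (aadd x y) z = aadd (rmul x z) (rmul y z).
Proof. by case: HA => _ [] _ []. Qed.
Lemma mulDr (x y z : A) : rmul x (aadd y z) = aadd (rmul x y) (rmul x z).
Proof. by case: HA => _ [] _ [] _ []. Qed.
Lemma rgr : is_graded (@rcomp G A).
Proof. by case: HA => _ [] _ [] _ [] _ []. Qed.
Lemma rcompM s t (a b : A) : rcomp s a -> rcomp t b -> rcomp (gmul s t) (rmul a b).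
Proof. case: HA => _ [] _ [] _ [] _ [] _ H; exact: H. Qed.
Lemma mulx0 (x : A) : rmul x azero = azero.
Proof. exact: (@f0 _ _ _ _ (rmul x) (mulDr x)). Qed.
Lemma mul0x (x : A) : rmul azero x = azero.
Proof. exact: (@f0 _ _ _ _ (fun y => rmul y x) (fun y z => mulDl y z x)). Qed.
End Ring.
#[export] Existing Instance gring_ab.

Section LMod.
Context {G : group} {A : gring G} {HA : is_gring A} {M : lmod A} {HM : is_lgmod M}.
#[local] Instance lgmod_ab : is_abgrp M. Proof. by case: HM. Qed.
Lemma lactDl (a b : A) (m : M) : lact (aadd a b) m = aadd (lact a m) (lact b m).
Proof. by case: HM => _ []. Qed.
Lemma lactDr (a : A) (m n : M) : lact a (aadd m n) = aadd (lact a m) (lact a n).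
Proof. by case: HM => _ [] _ []. Qed.
Lemma lactM (a b : A) (m : M) : lact (rmul a b) m = lact a (lact b m).
Proof. by case: HM => _ [] _ [] _ []. Qed.
Lemma lgr : is_graded (lcomp M).
Proof. by case: HM => _ [] _ [] _ [] _ []. Qed.
Lemma lcompM s t (a : A) (m : M) : rcomp s a -> lcomp M t m -> lcomp M (gmul s t) (lact a m).
Proof. case: HM => _ [] _ [] _ [] _ [] _ H; exact: H. Qed.
Lemma ladd_r (a : A) : ladditive (lact a : M -> M).
Proof. move=> x y; exact: lactDr. Qed.
Lemma ladd_l (m : M) : ladditive (fun a : A => lact a m).
Proof. move=> x y; exact: lactDl. Qed.
Lemma lact0r (a : A) : lact a (azero : M) = azero.
Proof. exact: f0 (ladd_r a). Qed.
Lemma lact0l (m : M) : lact (azero : A) m = azero.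
Proof. exact: f0 (ladd_l m). Qed.
Lemma lactNr (a : A) (m : M) : lact a (aopp m) = aopp (lact a m).
Proof. exact: (@fopp _ _ _ _ _ (ladd_r a) m). Qed.
Lemma lact_asumr X (l : seq X) (a : A) (F : X -> M) :
  lact a (asum l F) = asum l (fun x => lact a (F x)).
Proof. exact: (fasum (ladd_r a) l F). Qed.
Lemma lact_asuml X (l : seq X) (m : M) (F : X -> A) :
  lact (asum l F) m = asum l (fun x => lact (F x) m).
Proof. exact: (fasum (ladd_l m) l F). Qed.
End LMod.
#[export] Existing Instance lgmod_ab.

Section RMod.
Context {G : group} {A : gring G} {HA : is_gring A} {M : rmod A} {HM : is_rgmod M}.
#[local] Instance rgmod_ab : is_abgrp M. Proof. by case: HM. Qed.
Lemma ractDa (m : M) (a b : A) : ract m (aadd a b) = aadd (ract m a) (ract m b).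
Proof. by case: HM => _ []. Qed.
Lemma ractDm (m n : M) (a : A) : ract (aadd m n) a = aadd (ract m a) (ract n a).
Proof. by case: HM => _ [] _ []. Qed.
Lemma ractM (m : M) (a b : A) : ract m (rmul a b) = ract (ract m a) b.
Proof. by case: HM => _ [] _ [] _ []. Qed.
Lemma rgrm : is_graded (rmcomp M).
Proof. by case: HM => _ [] _ [] _ [] _ []. Qed.
Lemma rcompMm s t (m : M) (a : A) : rmcomp M t m -> rcomp s a -> rmcomp M (gmul t s) (ract m a).
Proof. case: HM => _ [] _ [] _ [] _ [] _ H; exact: H. Qed.
Lemma radd_m (a : A) : ladditive (fun m : M => ract m a).
Proof. move=> x y; exact: ractDm. Qed.
Lemma radd_a (m : M) : ladditive (fun a : A => ract m a).
Proof. move=> x y; exact: ractDa. Qed.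
Lemma ract0m (a : A) : ract (azero : M) a = azero.
Proof. exact: f0 (radd_m a). Qed.
Lemma ract0a (m : M) : ract m (azero : A) = azero.
Proof. exact: f0 (radd_a m). Qed.
Lemma ract_asumm X (l : seq X) (a : A) (F : X -> M) :
  ract (asum l F) a = asum l (fun x => ract (F x) a).
Proof. exact: (fasum (radd_m a) l F). Qed.
Lemma ract_asuma X (l : seq X) (m : M) (F : X -> A) :
  ract m (asum l F) = asum l (fun x => ract m (F x)).
Proof. exact: (fasum (radd_a m) l F). Qed.
End RMod.
#[export] Existing Instance rgmod_ab.

Lemma mul_asuml {G} {A : gring G} {HA : is_gring A} X (l : seq X) (a : A) (F : X -> A) :
  rmul (asum l F) a = asum l (fun x => rmul (F x) a).
Proof. exact: (fasum (fun x y => mulDl x y a) l F). Qed.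
Lemma mul_asumr {G} {A : gring G} {HA : is_gring A} X (l : seq X) (a : A) (F : X -> A) :
  rmul a (asum l F) = asum l (fun x => rmul a (F x)).
Proof. exact: (fasum (mulDr a) l F). Qed.

Section BiMod.
Context {G : group} {A B : gring G} {HA : is_gring A} {HB : is_gring B}
  {P : bimod A B} {HP : is_gbimod P}.
#[local] Instance bimod_lg : is_lgmod (bimod_l P). Proof. by case: HP. Qed.
#[local] Instance bimod_rg : is_rgmod (bimod_r P). Proof. by case: HP => _ []. Qed.
#[local] Instance bimod_ab : is_abgrp P. Proof. exact: (@lgmod_ab _ _ (bimod_l P) _). Qed.
Lemma bcomm (a : A) (m : P) (b : B) : bract (blact a m) b = blact a (bract m b).
Proof. by case: HP => _ []. Qed.
Lemma blactDl (a b : A) (m : P) : blact (aadd a b) m = aadd (blact a m) (blact b m).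
Proof. exact: (lactDl (M:=bimod_l P)). Qed.
Lemma blactDr (a : A) (m n : P) : blact a (aadd m n) = aadd (blact a m) (blact a n).
Proof. exact: (lactDr (M:=bimod_l P)). Qed.
Lemma blactM (a b : A) (m : P) : blact (rmul a b) m = blact a (blact b m).
Proof. exact: (lactM (M:=bimod_l P)). Qed.
Lemma blact0r (a : A) : blact a (azero : P) = azero.
Proof. exact: (lact0r (M:=bimod_l P)). Qed.
Lemma blact0l (m : P) : blact (azero : A) m = azero.
Proof. exact: (lact0l (M:=bimod_l P)). Qed.
Lemma blact_asumr X (l : seq X) (a : A) (F : X -> P) :
  blact a (asum l F) = asum l (fun x => blact a (F x)).
Proof. exact: (lact_asumr (M:=bimod_l P) l a F). Qed.
Lemma blact_asuml X (l : seq X) (m : P) (F : X -> A) :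
  blact (asum l F) m = asum l (fun x => blact (F x) m).
Proof. exact: (lact_asuml (M:=bimod_l P) l m F). Qed.
Lemma bractDa (m : P) (a b : B) : bract m (aadd a b) = aadd (bract m a) (bract m b).
Proof. exact: (ractDa (M:=bimod_r P)). Qed.
Lemma bractDm (m n : P) (a : B) : bract (aadd m n) a = aadd (bract m a) (bract n a).
Proof. exact: (ractDm (M:=bimod_r P)). Qed.
Lemma bractM (m : P) (a b : B) : bract m (rmul a b) = bract (bract m a) b.
Proof. exact: (ractM (M:=bimod_r P)). Qed.
Lemma bract0m (a : B) : bract (azero : P) a = azero.
Proof. exact: (ract0m (M:=bimod_r P)). Qed.
Lemma bract0a (m : P) : bract m (azero : B) = azero.
Proof. exact: (ract0a (M:=bimod_r P)). Qed.
Lemma bract_asumm X (l : seq X) (a : B) (F : X -> P) :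
  bract (asum l F) a = asum l (fun x => bract (F x) a).
Proof. exact: (ract_asumm (M:=bimod_r P) l a F). Qed.
Lemma bract_asuma X (l : seq X) (m : P) (F : X -> B) :
  bract m (asum l F) = asum l (fun x => bract m (F x)).
Proof. exact: (ract_asuma (M:=bimod_r P) l m F). Qed.
Lemma bgr : is_graded (bcomp P).
Proof. exact: (lgr (M:=bimod_l P)). Qed.
End BiMod.
#[export] Existing Instance bimod_lg.
#[export] Existing Instance bimod_rg.
#[export] Existing Instance bimod_ab.
Lemma sub_add2 (M : abgrp) {HM : is_abgrp M} (a b c d : M) :
  aadd (aadd a b) (aopp (aadd c d)) = aadd (aadd a (aopp c)) (aadd b (aopp d)).
Proof.
rewrite oppD -!addA; congr aadd; rewrite !addA; congr aadd; exact: addC.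
Qed.
Lemma sub_trans (M : abgrp) {HM : is_abgrp M} (x y z : M) :
  aadd x (aopp z) = aadd (aadd x (aopp y)) (aadd y (aopp z)).
Proof. by rewrite -addA (addA (aopp y)) addNx add0. Qed.
Lemma sub0 (M : abgrp) {HM : is_abgrp M} (x : M) : aadd x (aopp azero) = x.
Proof. by rewrite opp0 addx0. Qed.

Lemma sig_eq T (Pr : T -> Prop) (X Y : {x : T | Pr x}) : proj1_sig X = proj1_sig Y -> X = Y.
Proof.
case: X => x px; case: Y => y py /= E; subst y; f_equal; exact: proof_irrelevance.
Qed.

Lemma asum_cons (M : abgrp) X (x : X) l (F : X -> M) : asum (x :: l) F = aadd (F x) (asum l F).
Proof. by []. Qed.

Section Quot.
Context {G : group} {A : gring G} {HA : is_gring A} {M : lmod A} {HM : is_lgmod M}.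

Lemma tors0 : ltors M azero.
Proof. move=> a; exact: lact0r. Qed.
Lemma torsD x y : ltors M x -> ltors M y -> ltors M (aadd x y).
Proof. by move=> Hx Hy a; rewrite lactDr Hx Hy add0. Qed.
Lemma torsN x : ltors M x -> ltors M (aopp x).
Proof. by move=> Hx a; rewrite lactNr Hx opp0. Qed.
Lemma torsA (b : A) x : ltors M x -> ltors M (lact b x).
Proof. by move=> Hx a; rewrite -lactM Hx. Qed.

Lemma lqE (x y : M) : lq_of x = lq_of y <-> ltors M (aadd x (aopp y)).
Proof.
split.
- move=> /(f_equal (@proj1_sig _ _)) /= E.
  have : lcoset y y by rewrite /lcoset subxx; exact: tors0.
  by rewrite -E.
- move=> H; apply: sig_eq => /=.
  apply: functional_extensionality => z; apply: propositional_extensionality.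
  rewrite /lcoset; split => Hz.
  + rewrite (sub_trans y x z); apply: torsD => //.
    have := torsN H; by rewrite oppD oppK addC.
  + by rewrite (sub_trans x y z); apply: torsD.
Qed.

Lemma lq_ofK (X : lqcar M) : lq_of (lq_rep X) = X.
Proof.
apply: sig_eq => /=. rewrite /lq_rep.
case: (constructive_indefinite_description _ _) => x /= ->. done.
Qed.
Lemma lq_surj (X : lqcar M) : exists x, X = lq_of x.
Proof. by exists (lq_rep X); rewrite lq_ofK. Qed.
Lemma lq_rep_of (x : M) : ltors M (aadd (lq_rep (lq_of x)) (aopp x)).
Proof. by apply/lqE; rewrite lq_ofK. Qed.

Lemma addq (x y : M) : @aadd (lquot M) (lq_of x) (lq_of y) = lq_of (aadd x y).
Proof.
apply/lqE; rewrite sub_add2; apply: torsD; exact: lq_rep_of.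
Qed.
Lemma oppq (x : M) : @aopp (lquot M) (lq_of x) = lq_of (aopp x).
Proof.
apply/lqE. have := torsN (lq_rep_of x). by rewrite oppD.
Qed.
Lemma zeroq : @azero (lquot M) = lq_of azero.
Proof. by []. Qed.
Lemma lactq (a : A) (x : M) : @lact _ _ (lquot M) a (lq_of x) = lq_of (lact a x).
Proof.
apply/lqE. rewrite -lactNr -lactDr. apply: torsA; exact: lq_rep_of.
Qed.
Lemma lq_tors (x : M) : ltors M x -> lq_of x = lq_of azero.
Proof. by move=> H; apply/lqE; rewrite sub0. Qed.

#[local] Instance lquot_ab : is_abgrp (lquot M).
Proof.
split; [|split; [|split]].
- move=> X Y Z; case: (lq_surj X) => x ->; case: (lq_surj Y) => y ->;
  case: (lq_surj Z) => z ->. by rewrite (addq y z) (addq x y) (addq x) (addq _ z) addA.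
- move=> X Y; case: (lq_surj X) => x ->; case: (lq_surj Y) => y ->.
  by rewrite (addq x y) (addq y x) addC.
- move=> X; case: (lq_surj X) => x ->. by rewrite zeroq (addq azero x) add0.
- move=> X; case: (lq_surj X) => x ->. by rewrite (oppq x) (addq _ x) addNx.
Qed.

Lemma asumq X (l : seq X) (F : X -> M) :
  asum (M:=lquot M) l (fun y => lq_of (F y)) = lq_of (asum l F).
Proof. elim: l => [|x l IH] //. by rewrite asum_cons IH (addq (F x)). Qed.

Lemma tors_comp (x : M) (l : seq G) (f : G -> M) :
  ltors M x -> List.NoDup l -> (forall s, lcomp M s (f s)) -> x = asum l f ->
  forall s, List.In s l -> ltors M (f s).
Proof.
move=> Hx ND Hc E s Hs a.
have [la [fa [_ [Hca ->]]]] := grdec rgr a.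
rewrite lact_asuml; apply: asum_zero => d _.
have := (@gruniq_k _ _ _ (lgr (HM:=HM)) l (fun s => lact (fa d) (f s)) (gmul d) (gmul (ginv d))).
move=> /(_ (gK1 d) (gK2 d) ND) H; apply: H => //.
- move=> s'; apply: lcompM => //.
- by rewrite -lact_asumr -E.
Qed.

Lemma lquot_graded : is_graded (lcomp (lquot M)).
Proof.
have Hg := lgr (HM:=HM).
split; [|split; [|split; [|split]]].
- move=> s; exists azero; split => //; exact: gr0 Hg s.
- move=> s X Y HX HY.
  have [x [Hx ->]] : exists m, lcomp M s m /\ X = lq_of m := HX.
  have [y [Hy ->]] : exists m, lcomp M s m /\ Y = lq_of m := HY.
  exists (aadd x y); split; last exact: addq.
  exact: (gradd Hg Hx Hy).
- move=> s X HX.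
  have [x [Hx ->]] : exists m, lcomp M s m /\ X = lq_of m := HX.
  exists (aopp x); split; last exact: oppq.
  exact: (gropp Hg Hx).
- move=> X; case: (lq_surj X) => x ->.
  have [l [f [ND [Hc E]]]] := grdec Hg x.
  exists l, (fun s => lq_of (f s)); split => //; split.
    by move=> s; exists (f s).
  by rewrite asumq E.
- move=> l f ND Hc E s Hs.
  pose m := fun s => proj1_sig (constructive_indefinite_description _ (Hc s)).
  have Hm : forall s, lcomp M s (m s) /\ f s = lq_of (m s).
    by move=> s'; rewrite /m; case: constructive_indefinite_description.
  have E' : asum (M:=lquot M) l f = lq_of (asum l m).
    rewrite -asumq; apply: asum_eq => s' _; exact: (Hm s').2.
  rewrite E' zeroq in E. move/lqE: E; rewrite sub0 => Ht.
  rewrite (Hm s).2 zeroq; apply: lq_tors.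
  apply: (tors_comp Ht ND) => // s'; exact: (Hm s').1.
Qed.

#[local] Instance lquot_lgmod : is_lgmod (lquot M).
Proof.
split; first exact: lquot_ab.
split.
  move=> a b X; case: (lq_surj X) => x ->. by rewrite !lactq addq lactDl.
split.
  move=> a X Y; case: (lq_surj X) => x ->; case: (lq_surj Y) => y ->.
  by rewrite addq !lactq addq lactDr.
split.
  move=> a b X; case: (lq_surj X) => x ->. by rewrite !lactq lactM.
split; first exact: lquot_graded.
move=> s t a X Ha HX.
have [x [Hx ->]] : exists m, lcomp M t m /\ X = lq_of m := HX.
exists (lact a x); split; last exact: lactq.
exact: lcompM.
Qed.

Lemma lquot_unital : lunital M -> lunital (lquot M).
Proof.
move=> HU X; case: (lq_surj X) => x ->.
have [l ->] := HU x.
exists (map (fun y => (y.1, lq_of y.2)) l).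
rewrite asum_map -asumq; apply: asum_eq => y _; exact: (esym (lactq y.1 y.2)).
Qed.

Lemma lquot_tfree : Defs.idempotent A -> ltfree (lquot M).
Proof.
move=> Hid X; case: (lq_surj X) => x -> Ht.
rewrite zeroq; apply: lq_tors => c.
have [l ->] := Hid c.
rewrite lact_asuml; apply: asum_zero => y _.
rewrite lactM.
have := Ht y.2; rewrite lactq zeroq => /lqE; rewrite sub0 => H.
exact: H.
Qed.
End Quot.
#[export] Existing Instance lquot_ab.
#[export] Existing Instance lquot_lgmod.
Lemma gsusp (G : group) (t c d : G) : gmul (gmul (gmul t (ginv (gmul c d))) c) d = t.
Proof. by rewrite -gmulA -gmulA gmulVx gmulx1. Qed.

Section Gen.
Context {G : group} {A : gring G} {HA : is_gring A} (P : lmod A) {HP : is_lgmod P}.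

Definition hspan (a : A) := exists l : seq (P * (G * (P -> A))),
  (forall x, List.In x l -> lhom_deg P (lreg A) x.2.1 x.2.2) /\
  a = asum l (fun x => x.2.2 x.1).

Lemma hspan0 : hspan azero.
Proof. by exists [::]. Qed.
Lemma hspanD a b : hspan a -> hspan b -> hspan (aadd a b).
Proof.
rewrite /hspan.
move=> H1.
move: H1 => [l1 [H1 E1]].
move=> [l2 [H2 E2]]; subst a b; exists (l1 ++ l2); split; last by rewrite asum_cat.
move=> x Hx; case: (List.in_app_or _ _ _ Hx) => ?; [exact: H1 | exact: H2].
Qed.
Lemma hspan_asum X (l : seq X) (F : X -> A) :
  (forall x, List.In x l -> hspan (F x)) -> hspan (asum l F).
Proof.
elim: l => [|x l IH] H; first exact: hspan0.
apply: hspanD; first by apply: H; left.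
by apply: IH => y Hy; apply: H; right.
Qed.

Hypothesis Hsp : forall a : A, hspan a.

Lemma gen_main (M : lmod A) {HM : is_lgmod M} : lunital M ->
  forall (N : abgrp) {HN : is_abgrp N} (f : M -> N), ladditive f ->
  forall x, f x <> azero ->
  exists s (g : P -> M), lgr_map_susp (P:=P) (M:=M) s g /\ exists y, f (g y) <> azero.
Proof.
move=> HU N HN f Hf x Hx.
have [l El] := HU x. rewrite El (fasum Hf) in Hx.
have [[a m] [_ Ham]] := asum_nz Hx. rewrite /= in Ham.
have [lm [fm [_ [Hcm Em]]]] := grdec (lgr (HM:=HM)) m.
rewrite Em lact_asumr (fasum Hf) in Ham.
have [d [_ Hd]] := asum_nz Ham.
have [la [Hla Ea]] := Hsp a.
rewrite Ea lact_asuml (fasum Hf) in Hd.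
have [[p [c h]] [Hin Hy]] := asum_nz Hd. rewrite /= in Hy.
have := Hla _ Hin; rewrite /lhom_deg /= => -[Hh1 [Hh2 Hh3]].
exists (ginv (gmul c d)), (fun p => lact (h p) (fm d)).
split; last by exists p.
split; [|split].
- by move=> y z; rewrite Hh1 lactDl.
- by move=> b y; rewrite Hh2 lactM.
- move=> t y Hy'.
  rewrite -[t in lcomp M t _](gsusp t c d). exact: (lcompM (HM:=HM) (Hh3 _ _ Hy') (Hcm d)).
Qed.

Lemma gen_gen (M : lmod A) {HM : is_lgmod M} : lunital M -> lgenerates P M.
Proof.
move=> HU N HN HNu f [Hf _] [x Hx]. exact: (gen_main HU Hf Hx).
Qed.

Lemma gen_quot : Defs.idempotent A -> lunital P -> lgr_generator (lquot P).
Proof.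
move=> Hid HUP; split.
  split; first exact: lquot_lgmod.
  split; [exact: lquot_unital | exact: lquot_tfree].
move=> M [HM [HUM HTM]] N HN HNu f [Hf _] [x Hx].
have [s [g [[Hg1 [Hg2 Hg3]] [y Hy]]]] := gen_main HUM Hf Hx.
have Hk : forall z, ltors P z -> g z = azero.
  move=> z Hz; apply: HTM => a; rewrite -Hg2 Hz; exact: (f0 Hg1).
have Hr : forall z, g (lq_rep (lq_of z)) = g z.
  move=> z. rewrite -(subKx (lq_rep (lq_of z)) z) Hg1 Hk ?add0 //.
  exact: lq_rep_of.
exists s, (fun X => g (lq_rep X)); split; last by exists (lq_of y); rewrite Hr.
split; [|split].
- move=> X Y; case: (lq_surj X) => x1 ->; case: (lq_surj Y) => y1 ->.
  by rewrite (addq x1 y1) !Hr Hg1.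
- move=> a X; case: (lq_surj X) => x1 ->.
  by rewrite (lactq a x1) !Hr Hg2.
- move=> t X HX.
  have [m [Hm ->]] : exists m, lcomp P (gmul t s) m /\ X = lq_of m := HX.
  rewrite Hr; exact: Hg3.
Qed.
End Gen.
Section Reg.
Context {G : group} {A : gring G} {HA : is_gring A}.
#[local] Instance lreg_lgmod : is_lgmod (lreg A).
Proof.
split; first exact: gring_ab.
split; first by move=> *; exact: mulDl.
split; first by move=> *; exact: mulDr.
split; first by move=> *; rewrite /= mulA.
split; first exact: rgr.
move=> *; exact: rcompM.
Qed.
#[local] Instance rreg_rgmod : is_rgmod (rreg A).
Proof.
split; first exact: gring_ab.
split; first by move=> *; exact: mulDr.
split; first by move=> *; exact: mulDl.
split; first by move=> *; rewrite /= mulA.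
split; first exact: rgr.
move=> *; exact: rcompM.
Qed.
Lemma lreg_unital : Defs.idempotent A -> lunital (lreg A).
Proof. move=> H a; exact: H. Qed.
Lemma rreg_unital : Defs.idempotent A -> runital (rreg A).
Proof. move=> H a; exact: H. Qed.
End Reg.
#[export] Existing Instance lreg_lgmod.
#[export] Existing Instance rreg_rgmod.

Section Op.
Context {G : group}.
Definition Gop : group.
refine (@Defs.Group (gT G) (fun x y => gmul y x) (@gone G) (@ginv G) _ _ _ _ _).
- by move=> x y z; rewrite gmulA.
- exact: gmulx1.
- exact: gmul1x.
- exact: gmulxV.
- exact: gmulVx.
Defined.

Definition Aop (A : gring G) : gring Gop :=
  @Defs.GRing Gop (rab A) (fun x y => rmul y x) (@rcomp G A).
Definition r2l (A : gring G) (M : rmod A) : lmod (Aop A) :=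
  @Defs.LMod Gop (Aop A) (rmab M) (fun a m => ract m a) (rmcomp M).

Context {A : gring G} {HA : is_gring A}.
#[local] Instance Aop_gring : is_gring (Aop A).
Proof.
split; first exact: (gring_ab (A:=A)).
split; first by move=> x y z /=; rewrite mulA.
split; first by move=> x y z /=; rewrite mulDr.
split; first by move=> x y z /=; rewrite mulDl.
split; first by have := rgr (HA:=HA); rewrite /is_graded.
move=> s t a b Ha Hb /=; exact: (rcompM (A:=A) (HA:=HA) Hb Ha).
Qed.
Lemma Aop_idem : Defs.idempotent A -> Defs.idempotent (Aop A).
Proof.
move=> H a; have [l ->] := H a.
exists (map (fun x => (x.2, x.1)) l); by rewrite asum_map.
Qed.

Context {M : rmod A}.
#[local] Instance r2l_lgmod {HM : is_rgmod M} : is_lgmod (r2l M).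
Proof.
split; first exact: (rgmod_ab (M:=M)).
split; first by move=> a b m /=; rewrite ractDa.
split; first by move=> a m n /=; rewrite ractDm.
split; first by move=> a b m /=; rewrite ractM.
split; first by have := rgrm (HM:=HM); rewrite /is_graded.
move=> s t a m Ha Hm /=; exact: (rcompMm (M:=M) (HM:=HM) Hm Ha).
Qed.
Lemma l2r_rgmod : is_lgmod (r2l M) -> is_rgmod M.
Proof.
move=> HL.
split; first exact: (lgmod_ab (M:=r2l M)).
split; first by move=> m a b; exact: (lactDl (M:=r2l M)).
split; first by move=> m n a; exact: (lactDr (M:=r2l M)).
split; first by move=> m a b; exact: (lactM (M:=r2l M)).
split; first by have := lgr (HM:=HL); rewrite /is_graded.
move=> s t m a Hm Ha; exact: (lcompM (M:=r2l M) Ha Hm).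
Qed.
Lemma r2l_unital : runital M -> lunital (r2l M).
Proof.
move=> H m; have [l ->] := H m.
exists (map (fun x => (x.2, x.1)) l); by rewrite asum_map.
Qed.
Lemma l2r_unital : lunital (r2l M) -> runital M.
Proof.
move=> H m; have [l ->] := H m.
exists (map (fun x => (x.2, x.1)) l); by rewrite asum_map.
Qed.
End Op.
#[export] Existing Instance Aop_gring.
#[export] Existing Instance r2l_lgmod.

Section Transfer.
Context {G : group} {A : gring G} {HA : is_gring A}.

Lemma lgen2rgen (P M : rmod A) : lgenerates (r2l P) (r2l M) -> rgenerates P M.
Proof.
move=> H N HN HNu f [Hf1 [Hf2 Hf3]] Hx.
have [s [g [[Hg1 [Hg2 Hg3]] Hy]]] :=
  H (r2l N) (r2l_lgmod (HM:=HN)) (r2l_unital HNu) f (conj Hf1 (conj (fun a x => Hf2 x a) Hf3)) Hx.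
exists s, g; split => //; split; [exact: Hg1 | split; [move=> x a; exact: Hg2 | exact: Hg3]].
Qed.

Lemma lgrgen2rgrgen (P : rmod A) : lgr_generator (lquot (r2l P)) -> rgr_generator (rquot P).
Proof.
change (lgr_generator (r2l (rquot P)) -> rgr_generator (rquot P)).
move=> [[HL [HU HT]] H]; split.
  split; first exact: l2r_rgmod.
  split; [exact: l2r_unital | exact: HT].
move=> M [HM [HUM HTM]]; apply: lgen2rgen; apply: H.
split; first exact: r2l_lgmod.
split; [exact: r2l_unital | exact: HTM].
Qed.
End Transfer.
Lemma asum_swap (M : abgrp) {HM : is_abgrp M} X Y (l1 : seq X) (l2 : seq Y) (F : X -> Y -> M) :
  asum l1 (fun x => asum l2 (fun y => F x y)) = asum l2 (fun y => asum l1 (fun x => F x y)).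
Proof.
elim: l1 => [|x l IH] /=; first by rewrite asum0.
by rewrite IH -asum_add.
Qed.

Lemma lHOM_props {G : group} {A : gring G} {HA : is_gring A} (M N : lmod A) {HN : is_lgmod N}
  (F : M -> N) : lHOM M N F -> ladditive F /\ (forall a x, F (lact a x) = lact a (F x)).
Proof.
move=> [l [Hl ->]]; split.
  apply: ladditive_asum => x Hx; by case: (Hl x Hx).
move=> a x; rewrite lact_asumr; apply: asum_eq => y Hy.
by case: (Hl y Hy) => _ [].
Qed.
Lemma rHOM_props {G : group} {A : gring G} {HA : is_gring A} (M N : rmod A) {HN : is_rgmod N}
  (F : M -> N) : rHOM M N F -> ladditive F /\ (forall x a, F (ract x a) = ract (F x) a).
Proof.
move=> [l [Hl ->]]; split.
  apply: ladditive_asum => x Hx; by case: (Hl x Hx).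
move=> x a; rewrite ract_asumm; apply: asum_eq => y Hy.
by case: (Hl y Hy) => _ [].
Qed.
Section Morita.
Context {G : group} {A B : gring G} {P : bimod A B} {Q : bimod B A}
  (mu : P -> Q -> A) (nu : Q -> P -> B).
Hypothesis HMor : is_gmorita mu nu.
Hypothesis Smu : mu_surj mu.
Hypothesis Snu : nu_surj nu.

#[local] Instance HA : is_gring A. Proof. by case: HMor => [[]]. Qed.
#[local] Instance HB : is_gring B. Proof. by case: HMor => [[? []]]. Qed.
#[local] Instance HP : is_gbimod P. Proof. by case: HMor => _ [[]]. Qed.
#[local] Instance HQ : is_gbimod Q. Proof. by case: HMor => _ [? []]. Qed.
Lemma IA : Defs.idempotent A. Proof. by case: HMor => [[? [? []]]]. Qed.
Lemma IB : Defs.idempotent B. Proof. by case: HMor => [[? [? []]]]. Qed.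
Lemma UPl : lunital (bimod_l P). Proof. by case: HMor => _ [? [? []]]. Qed.
Lemma UPr : runital (bimod_r P). Proof. by case: HMor => _ [? [? [? []]]]. Qed.
Lemma UQl : lunital (bimod_l Q). Proof. by case: HMor => _ [? [? [? [? []]]]]. Qed.
Lemma UQr : runital (bimod_r Q). Proof. by case: HMor => _ [? [? [? [? []]]]]. Qed.

Lemma mu_addl p p' q : mu (aadd p p') q = aadd (mu p q) (mu p' q).
Proof. by case: HMor => _ _ []. Qed.
Lemma mu_addr p q q' : mu p (aadd q q') = aadd (mu p q) (mu p q').
Proof. by case: HMor => _ _ [? []]. Qed.
Lemma mu_bal p (b : B) q : mu (bract p b) q = mu p (blact b q).
Proof. by case: HMor => _ _ [? [? []]]. Qed.
Lemma mu_l (a : A) p q : mu (blact a p) q = rmul a (mu p q).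
Proof. by case: HMor => _ _ [? [? [? []]]]. Qed.
Lemma mu_r p q (a : A) : mu p (bract q a) = rmul (mu p q) a.
Proof. by case: HMor => _ _ [? [? [? [? []]]]]. Qed.
Lemma mu_deg s t p q : bcomp P s p -> bcomp Q t q -> rcomp (gmul s t) (mu p q).
Proof. case: HMor => _ _ [? [? [? [? [? H]]]]] _ _; exact: H. Qed.
Lemma nu_addl q q' p : nu (aadd q q') p = aadd (nu q p) (nu q' p).
Proof. by case: HMor => _ _ _ []. Qed.
Lemma nu_addr q p p' : nu q (aadd p p') = aadd (nu q p) (nu q p').
Proof. by case: HMor => _ _ _ [? []]. Qed.
Lemma nu_bal q (a : A) p : nu (bract q a) p = nu q (blact a p).
Proof. by case: HMor => _ _ _ [? [? []]]. Qed.
Lemma nu_l (b : B) q p : nu (blact b q) p = rmul b (nu q p).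
Proof. by case: HMor => _ _ _ [? [? [? []]]]. Qed.
Lemma nu_r q p (b : B) : nu q (bract p b) = rmul (nu q p) b.
Proof. by case: HMor => _ _ _ [? [? [? [? []]]]]. Qed.
Lemma nu_deg s t q p : bcomp Q s q -> bcomp P t p -> rcomp (gmul s t) (nu q p).
Proof. case: HMor => _ _ _ [? [? [? [? [? H]]]]] _; exact: H. Qed.
Lemma c1 p' q p : bract p' (nu q p) = blact (mu p' q) p.
Proof. by case: HMor => _ _ _ _ []. Qed.
Lemma c2 q' p q : bract q' (mu p q) = blact (nu q' p) q.
Proof. by case: HMor => _ _ _ _ []. Qed.

Lemma mu_add1 q : ladditive (fun p => mu p q). Proof. move=> x y; exact: mu_addl. Qed.
Lemma mu_add2 p : ladditive (mu p). Proof. move=> x y; exact: mu_addr. Qed.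
Lemma nu_add1 p : ladditive (fun q => nu q p). Proof. move=> x y; exact: nu_addl. Qed.
Lemma nu_add2 q : ladditive (nu q). Proof. move=> x y; exact: nu_addr. Qed.

(* (1) generation *)
Lemma hspanP (a : A) : hspan (bimod_l P) a.
Proof.
have [l ->] := Smu a.
apply: hspan_asum => -[p q] _ /=.
have [lq [fq [_ [Hc ->]]]] := grdec (bgr (P:=Q)) q.
rewrite (fasum (mu_add2 p)); apply: hspan_asum => c _.
exists [:: (p, (c, fun p' => mu p' (fq c)))]; split; last by rewrite /= addx0.
move=> x [<-|[]] /=; split; [|split].
- move=> y z; exact: mu_addl.
- move=> a' y /=; exact: mu_l.
- move=> t y Hy /=; exact: mu_deg.
Qed.

Lemma hspanQ (a : Aop A) : hspan (r2l (bimod_r Q)) a.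
Proof.
have [l ->] := Smu a.
apply: hspan_asum => -[p q] _ /=.
have [lp [fp [_ [Hc ->]]]] := grdec (bgr (P:=P)) p.
rewrite (fasum (mu_add1 q)); apply: hspan_asum => c _.
exists [:: (q, (c, fun q' => mu (fp c) q'))]; split; last by rewrite /= addx0.
move=> x [<-|[]] /=; split; [|split].
- move=> y z; exact: mu_addr.
- move=> a' y /=; exact: mu_r.
- move=> t y Hy /=; exact: mu_deg.
Qed.

Lemma R1 : lgenerates (bimod_l P) (lreg A).
Proof. apply: (gen_gen hspanP); exact: (lreg_unital IA). Qed.
Lemma R2 : rgenerates (bimod_r Q) (rreg A).
Proof.
apply: lgen2rgen; apply: (gen_gen hspanQ).
exact: (r2l_unital (rreg_unital IA)).
Qed.
Lemma R3 : lgr_generator (lquot (bimod_l P)).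
Proof. apply: (gen_quot hspanP); [exact: IA | exact: UPl]. Qed.
Lemma R4 : rgr_generator (rquot (bimod_r Q)).
Proof.
apply: lgrgen2rgrgen; apply: (gen_quot hspanQ); [exact: (Aop_idem IA) | exact: (r2l_unital UQr)].
Qed.
Lemma R5 : ker_mu_torsion mu.
Proof.
move=> l Hl; split.
- move=> a Z f HZ fl fr fb.
  have [la Ea] := Smu a.
  rewrite asum_map /=.
  have E1 : forall x : P * Q, f (blact a x.1) x.2 =
     asum la (fun y => f y.1 (bract y.2 (mu x.1 x.2))).
    move=> x; rewrite Ea blact_asuml.
    rewrite (fasum (f:=fun m => f m x.2) (fun m m' => fl m m' x.2)).
    apply: asum_eq => y _; by rewrite -c1 fb -c2.
  rewrite (asum_eq (fun x _ => E1 x)) asum_swap; apply: asum_zero => y _.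
  rewrite -(fasum (fr y.1)) -bract_asuma Hl bract0a.
  exact: (f0 (fr y.1)).
- move=> a Z f HZ fl fr fb.
  have [la Ea] := Smu a.
  rewrite asum_map /=.
  have E1 : forall x : P * Q, f x.1 (bract x.2 a) =
     asum la (fun y => f (blact (mu x.1 x.2) y.1) y.2).
    move=> x; rewrite Ea bract_asuma (fasum (fr x.1)).
    apply: asum_eq => y _; by rewrite c2 -fb c1.
  rewrite (asum_eq (fun x _ => E1 x)) asum_swap; apply: asum_zero => y _.
  rewrite -(fasum (f:=fun m => f m y.2) (fun m m' => fl m m' y.2)) -blact_asuml Hl blact0l.
  exact: (f0 (f:=fun m => f m y.2) (fun m m' => fl m m' y.2)).
Qed.

Lemma lHOM_mu q : lHOM (bimod_l P) (lreg A) (fun p => mu p q).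
Proof.
have [lq [fq [_ [Hc Eq]]]] := grdec (bgr (P:=Q)) q.
exists (map (fun c => (c, fun p => mu p (fq c))) lq); split.
  move=> x /List.in_map_iff [c [<- _]] /=; split; [|split].
  - move=> y z; exact: mu_addl.
  - move=> a' y /=; exact: mu_l.
  - move=> t y Hy /=; exact: mu_deg.
apply: functional_extensionality => p.
by rewrite asum_map Eq (fasum (mu_add2 p)).
Qed.

Lemma rHOM_nu q : rHOM (bimod_r P) (rreg B) (nu q).
Proof.
have [lq [fq [_ [Hc Eq]]]] := grdec (bgr (P:=Q)) q.
exists (map (fun c => (c, nu (fq c))) lq); split.
  move=> x /List.in_map_iff [c [<- _]] /=; split; [|split].
  - move=> y z; exact: nu_addr.
  - move=> y b /=; exact: nu_r.
  - move=> t y Hy /=; exact: nu_deg.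
apply: functional_extensionality => p.
by rewrite asum_map Eq (fasum (nu_add1 p)).
Qed.

Lemma mu_ker q : (fun p => mu p q) = (fun _ => azero) -> ltors (bimod_l Q) q.
Proof.
move=> E b; have [lb ->] := Snu b.
rewrite /= blact_asuml; apply: asum_zero => y _.
by rewrite -c2 (congr1 (fun f => f y.2) E) bract0a.
Qed.

Lemma nu_ker q : (fun p => nu q p) = (fun _ => azero) -> rtors (bimod_r Q) q.
Proof.
move=> E a; have [la ->] := Smu a.
rewrite /= bract_asuma; apply: asum_zero => y _.
by rewrite c2 (congr1 (fun f => f y.1) E) blact0l.
Qed.

Lemma SHOM_surj F : SHOM (M:=P) F -> exists n, (fun p => mu p n) = F.
Proof.
move=> [l [Hl ->]].
suff [n Hn] : exists n, forall p, mu p n = asum l (fun x => x.2 (bract p x.1)).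
  by exists n; apply: functional_extensionality.
elim: l Hl => [|x l IH] Hl.
  exists azero => p; exact: (f0 (mu_add2 p)).
have [n Hn] : exists n, forall p, mu p n = asum l (fun x => x.2 (bract p x.1)).
  by apply: IH => y Hy; apply: Hl; right.
case: x Hl => b h Hl.
have [Hh1 Hh2] := lHOM_props (Hl (b, h) (or_introl erefl)). rewrite /= in Hh1 Hh2.
have [lb Eb] := Snu b.
exists (aadd (asum lb (fun y => bract y.1 (h y.2))) n) => p.
rewrite mu_addr Hn /=; congr aadd.
rewrite Eb bract_asuma (fasum Hh1) (fasum (mu_add2 p)); apply: asum_eq => y _.
by rewrite mu_r c1 Hh2.
Qed.

Lemma HOMR_surj F : HOMR (M:=P) F -> exists n, nu n = F.
Proof.
move=> [l [Hl ->]].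
suff [n Hn] : exists n, forall p, nu n p = asum l (fun x => x.1 (blact x.2 p)).
  by exists n; apply: functional_extensionality.
elim: l Hl => [|x l IH] Hl.
  exists azero => p; exact: (f0 (nu_add1 p)).
have [n Hn] : exists n, forall p, nu n p = asum l (fun x => x.1 (blact x.2 p)).
  by apply: IH => y Hy; apply: Hl; right.
case: x Hl => h a Hl.
have [Hh1 Hh2] := rHOM_props (Hl (h, a) (or_introl erefl)). rewrite /= in Hh1 Hh2.
have [la Ea] := Smu a.
exists (aadd (asum la (fun y => blact (h y.1) y.2)) n) => p.
rewrite nu_addl Hn /=; congr aadd.
rewrite Ea blact_asuml (fasum Hh1) (fasum (nu_add1 p)); apply: asum_eq => y _.
by rewrite nu_l -c1 Hh2.
Qed.

Lemma R6 : SHOM_epi (fun q p => mu p q).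
Proof.
split.
- move=> q.
  have [lq Eq] := UQl q.
  exists (map (fun x => (x.1, fun p => mu p x.2)) lq); split.
    move=> x /List.in_map_iff [y [<- _]] /=; exact: lHOM_mu.
  apply: functional_extensionality => p.
  rewrite asum_map Eq (fasum (mu_add2 p)); apply: asum_eq => y _ /=.
  by rewrite mu_bal.
- exact: SHOM_surj.
- move=> n n'; apply: functional_extensionality => p; exact: mu_addr.
- split.
  + move=> b n; apply: functional_extensionality => p; by rewrite mu_bal.
  + move=> n a; apply: functional_extensionality => p; exact: mu_r.
- move=> t n Hn; split; [|split].
  + move=> y z; exact: mu_addl.
  + move=> a' y /=; exact: mu_l.
  + move=> u y Hy /=; exact: mu_deg.
Qed.

Lemma R7 : HOMR_epi (fun q p => nu q p).
Proof.
split.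
- move=> q.
  have [lq Eq] := UQr q.
  exists (map (fun x => (nu x.1, x.2)) lq); split.
    move=> x /List.in_map_iff [y [<- _]] /=; exact: rHOM_nu.
  apply: functional_extensionality => p.
  rewrite asum_map Eq (fasum (nu_add1 p)); apply: asum_eq => y _ /=.
  by rewrite nu_bal.
- exact: HOMR_surj.
- move=> n n'; apply: functional_extensionality => p; exact: nu_addl.
- split.
  + move=> b n; apply: functional_extensionality => p; exact: nu_l.
  + move=> n a; apply: functional_extensionality => p; by rewrite nu_bal.
- move=> t n Hn; split; [|split].
  + move=> y z; exact: nu_addr.
  + move=> y b /=; exact: nu_r.
  + move=> u y Hy /=; exact: nu_deg.
Qed.
Lemma R8 : ltfree (bimod_l Q) -> SHOM_iso (fun q p => mu p q).
Proof.
move=> TQ; split; first exact: R6.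
split.
  move=> q q' E; apply: sub_eq0; apply: TQ; apply: mu_ker.
  apply: functional_extensionality => p.
  by rewrite mu_addr (fopp (mu_add2 p)) (congr1 (fun f => f p) E) subxx.
move=> t F HF [Fd1 [Fd2 Fd3]].
have [q Eq] := SHOM_surj HF. subst F.
have [lq [fq [ND [It [Hc Eq]]]]] := grdec_with (bgr (P:=Q)) q t.
exists (fq t); split; first exact: Hc.
apply: functional_extensionality => p.
have [lp [fp [_ [Hcp ->]]]] := grdec (bgr (P:=P)) p.
rewrite (fasum (mu_add1 _)) (fasum (mu_add1 _)); apply: asum_eq => u _.
set pu := fp u.
pose h := fun c => aadd (mu pu (fq c)) (aopp (if deq c t then mu pu q else azero)).
have : h t = azero.
  apply: (@gruniq_k _ _ _ (rgr (A:=A)) lq h (gmul u) (gmul (ginv u)) (gK1 u) (gK2 u) ND) => //.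
  - move=> c; apply: (gradd (rgr (A:=A))); first exact: (mu_deg (Hcp u) (Hc c)).
    apply: (gropp (rgr (A:=A))); case: deqP => [->|_]; last exact: (gr0 (rgr (A:=A))).
    exact: (Fd3 u pu (Hcp u)).
  - rewrite /h asum_add asum_opp asum_delta // -(fasum (mu_add2 pu)) -Eq; exact: subxx.
rewrite /h deq_refl; exact: sub_eq0.
Qed.

Lemma R9 : rtfree (bimod_r Q) -> HOMR_iso (fun q p => nu q p).
Proof.
move=> TQ; split; first exact: R7.
split.
  move=> q q' E; apply: sub_eq0; apply: TQ; apply: nu_ker.
  apply: functional_extensionality => p.
  by rewrite nu_addl (fopp (nu_add1 p)) (congr1 (fun f => f p) E) subxx.
move=> t F HF [Fd1 [Fd2 Fd3]].
have [q Eq] := HOMR_surj HF. subst F.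
have [lq [fq [ND [It [Hc Eq]]]]] := grdec_with (bgr (P:=Q)) q t.
exists (fq t); split; first exact: Hc.
apply: functional_extensionality => p.
have [lp [fp [_ [Hcp ->]]]] := grdec (bgr (P:=P)) p.
rewrite (fasum (nu_add2 _)) (fasum (nu_add2 _)); apply: asum_eq => u _.
set pu := fp u.
pose h := fun c => aadd (nu (fq c) pu) (aopp (if deq c t then nu q pu else azero)).
have : h t = azero.
  apply: (@gruniq_k _ _ _ (rgr (A:=B)) lq h (fun c => gmul c u) (fun d => gmul d (ginv u)) (gK3 u) (gK4 u) ND) => //.
  - move=> c; apply: (gradd (rgr (A:=B))); first exact: (nu_deg (Hc c) (Hcp u)).
    apply: (gropp (rgr (A:=B))); case: deqP => [->|_]; last exact: (gr0 (rgr (A:=B))).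
    exact: (Fd3 u pu (Hcp u)).
  - rewrite /h asum_add asum_opp asum_delta // -(fasum (nu_add1 pu)) -Eq; exact: subxx.
rewrite /h deq_refl; exact: sub_eq0.
Qed.

Lemma ND1 : ltfree (bimod_l Q) -> forall q, (forall p, mu p q = azero) -> q = azero.
Proof. move=> TQ q H; apply: TQ; apply: mu_ker; exact: functional_extensionality. Qed.
Lemma ND2 : rtfree (bimod_r Q) -> forall q, (forall p, nu q p = azero) -> q = azero.
Proof. move=> TQ q H; apply: TQ; apply: nu_ker; exact: functional_extensionality. Qed.
End Morita.
Lemma gmorita_swap {G : group} {A B : gring G} {P : bimod A B} {Q : bimod B A}
  (mu : P -> Q -> A) (nu : Q -> P -> B) : is_gmorita mu nu -> is_gmorita nu mu.
Proof.
case=> [[a1 [a2 [a3 a4]]]] [b1 [b2 [b3 [b4 [b5 b6]]]]] Hm Hn [C1 C2].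
split => //.
Qed.

Unset Implicit Arguments.
Theorem proposition5p1 (G : group) (A B : gring G) (P : bimod A B) (Q : bimod B A)
    (mu : P -> Q -> A) (nu : Q -> P -> B) :
  is_gmorita mu nu -> mu_surj mu -> nu_surj nu ->
  [/\ (* (1) *)
      (lgenerates (bimod_l P) (lreg A) /\ lgenerates (bimod_l Q) (lreg B) /\
       rgenerates (bimod_r Q) (rreg A) /\ rgenerates (bimod_r P) (rreg B)) /\
      (lgr_generator (lquot (bimod_l P)) /\ lgr_generator (lquot (bimod_l Q)) /\
       rgr_generator (rquot (bimod_r P)) /\ rgr_generator (rquot (bimod_r Q))),
      (* (2) *)
      ker_mu_torsion mu /\ ker_nu_torsion nu,
      (* (3) *)
      (SHOM_epi (fun q p => mu p q) /\
         forall q, (fun p => mu p q) = (fun _ => azero) -> ltors (bimod_l Q) q) /\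
      (HOMR_epi (fun q p => nu q p) /\
         forall q, (fun p => nu q p) = (fun _ => azero) -> rtors (bimod_r Q) q) /\
      (SHOM_epi (fun p q => nu q p) /\
         forall p, (fun q => nu q p) = (fun _ => azero) -> ltors (bimod_l P) p) /\
      (HOMR_epi (fun p q => mu p q) /\
         forall p, (fun q => mu p q) = (fun _ => azero) -> rtors (bimod_r P) p)
    & (* (4) and (5) under torsion-freeness *)
      (ltfree (lreg A) /\ rtfree (rreg A) /\ ltfree (lreg B) /\ rtfree (rreg B) /\
       ltfree (bimod_l P) /\ rtfree (bimod_r P) /\
       ltfree (bimod_l Q) /\ rtfree (bimod_r Q)) ->
      ((exists phi : Q -> P -> A, SHOM_iso phi) /\
       (exists phi : Q -> P -> B, HOMR_iso phi) /\
       (exists phi : P -> Q -> B, SHOM_iso phi) /\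
       (exists phi : P -> Q -> A, HOMR_iso phi)) /\
      nondegenerate mu nu ].
Proof.
move=> HM Smu Snu.
have HM' := gmorita_swap HM.
have Smu' : mu_surj nu := Snu.
have Snu' : nu_surj mu := Smu.
split.
- split.
    split; first exact: (R1 HM Smu).
    split; first exact: (R1 HM' Smu').
    split; first exact: (R2 HM Smu).
    exact: (R2 HM' Smu').
  split; first exact: (R3 HM Smu).
  split; first exact: (R3 HM' Smu').
  split; first exact: (R4 HM' Smu').
  exact: (R4 HM Smu).
- split; first exact: (R5 HM Smu).
  exact: (R5 HM' Smu').
- split.
    split; first exact: (R6 HM Snu).
    exact: (mu_ker HM Snu).
  split.
    split; first exact: (R7 HM Smu).
    exact: (nu_ker HM Smu).
  split.
    split; first exact: (R6 HM' Snu').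
    exact: (mu_ker HM' Snu').
  split; first exact: (R7 HM' Smu').
  exact: (nu_ker HM' Smu').
- move=> [_ [_ [_ [_ [TPl [TPr [TQl TQr]]]]]]].
  split.
    split; first by exists (fun q p => mu p q); exact: (R8 HM Snu TQl).
    split; first by exists (fun q p => nu q p); exact: (R9 HM Smu TQr).
    split; first by exists (fun p q => nu q p); exact: (R8 HM' Snu' TPl).
    by exists (fun p q => mu p q); exact: (R9 HM' Smu' TPr).
  split.
  + by split; [|split; [|split]].
  + exact: (ND1 HM Snu TQl).
  + exact: (ND2 HM' Smu' TPr).
  + exact: (ND1 HM' Snu' TPl).
  + exact: (ND2 HM Smu TQr).
Qed.
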